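(* Fix $c\in\{0,1\}$. Consider the family of distributions on $(0,1)\cup\{c\}$ with densities, with respect to the measure $\lambda+\delta_c$ (where $\lambda$ is Lebesgue measure on $(0,1)$ and $\delta_c$ is the point mass at $c$), $$\mathrm{bi}_c(y;\alpha,\mu,\phi)=\begin{cases}\alpha, & y=c,\\ (1-\alpha)f(y;\mu,\phi), & y\in(0,1),\end{cases}$$ indexed by $(\alpha,\mu,\phi)\in(0,1)\times(0,1)\times(0,\infty)$, where $$f(y;\mu,\phi)=\frac{\Gamma(\phi)}{\Gamma(\mu\phi)\Gamma((1-\mu)\phi)}\,y^{\mu\phi-1}(1-y)^{(1-\mu)\phi-1},\quad y\in(0,1),$$ is the beta density with mean $\mu$ and precision $\phi$. (For $c=0$ this is the zero-inflated beta distribution $\mathrm{BEZI}(\alpha,\mu,\phi)$, and for $c=1$ the one-inflated beta distribution $\mathrm{BEOI}(\alpha,\mu,\phi)$.) Then this family (for either choice of $c$) is a three-parameter exponential family of full rank.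
   Context: A family of densities $\{p_\theta:\theta\in\Theta\}$ with respect to a measure $\nu$ on a space $\mathcal Y$ is called a $k$-parameter exponential family of full rank if there are a one-to-one map $\theta\mapsto\eta(\theta)\in\mathbb R^k$, a statistic $T=(t_1,\dots,t_k):\mathcal Y\to\mathbb R^k$, a real function $B^*$ and a positive function $h$ on $\mathcal Y$ such that $p_\theta(y)=\exp\{\eta(\theta)^\top T(y)-B^*(\eta(\theta))\}h(y)$ for all $y$ and $\theta$, where neither the components $t_1,\dots,t_k$ nor the components of $\eta$ satisfy a linear constraint, and the set $\{\eta(\theta):\theta\in\Theta\}$ contains a $k$-dimensional open rectangle. *)

(* Defs.v *)
From HB Require Import structures.
From mathcomp Require Import all_boot all_order all_algebra.
From mathcomp Require Import all_classical all_reals all_analysis.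
Set Implicit Arguments. Unset Strict Implicit. Unset Printing Implicit Defensive.
Import Order.TTheory GRing.Theory Num.Theory.
Import numFieldNormedType.Exports.
Local Open Scope classical_set_scope.
Local Open Scope ring_scope.

Definition Gamma (R : realType) (s : R) : R :=
  Rintegral (@lebesgue_measure R) `]0, +oo[
            (fun x => x `^ (s - 1) * expR (- x)).

Definition beta_density (R : realType) (mu phi y : R) : R :=
  Gamma phi / (Gamma (mu * phi) * Gamma ((1 - mu) * phi))
  * y `^ (mu * phi - 1) * (1 - y) `^ ((1 - mu) * phi - 1).

Definition Ysupp (R : realType) (c : R) : set R := `]0, 1[ `|` [set c].

Definition nu (R : realType) (c : R) : {measure set (measurableTypeR R) -> \bar R} :=
  measure_add
    (@mrestr _ (measurableTypeR R) R `]0, 1[ (@lebesgue_measure R) (measurable_itv _))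
    (@dirac _ (measurableTypeR R) c R).

Definition Theta (R : realType) : set (R * R * R) :=
  [set th | 0 < th.1.1 < 1 /\ 0 < th.1.2 < 1 /\ 0 < th.2].

Definition bi (R : realType) (c : R) (th : R * R * R) (y : R) : R :=
  let: (alpha, mu, phi) := th in
  if y == c then alpha else (1 - alpha) * beta_density mu phi y.

Definition dotv (R : realType) (k : nat) (a b : 'I_k -> R) : R :=
  \sum_(i < k) a i * b i.

Definition full_rank_exp_family (d : measure_display) (T : measurableType d)
    (R : realType) (nu0 : {measure set T -> \bar R}) (Y0 : set T)
    (P : Type) (Th : set P) (k : nat) (p : P -> T -> R) : Prop :=
  exists (eta : P -> 'I_k -> R) (Tst : T -> 'I_k -> R)
         (Bst : ('I_k -> R) -> R) (h : T -> R),
        (forall t1 t2, Th t1 -> Th t2 -> eta t1 = eta t2 -> t1 = t2) /\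
        (forall y, Y0 y -> 0 < h y) /\
        (forall th y, Th th -> Y0 y ->
           p th y = expR (dotv (eta th) (Tst y) - Bst (eta th)) * h y) /\
        (forall (a : 'I_k -> R) (b : R),
           {ae nu0, forall y, Y0 y -> dotv a (Tst y) = b} ->
           forall i, a i = 0) /\
        (forall (a : 'I_k -> R) (b : R),
           (forall th, Th th -> dotv a (eta th) = b) -> forall i, a i = 0) /\
        exists lo hi : 'I_k -> R,
          (forall i, lo i < hi i) /\
          (forall x : 'I_k -> R, (forall i, lo i < x i < hi i) ->
             exists2 th, Th th & eta th = x).

(* Main.v *)
Require Import Defs.
From HB Require Import structures.
From mathcomp Require Import all_boot all_order all_algebra.
From mathcomp Require Import all_classical all_reals all_analysis.
From mathcomp Require Import measurable_realfun exponential_distribution.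
From mathcomp Require Import ring lra.
Import Order.TTheory GRing.Theory Num.Theory.
Import numFieldNormedType.Exports.
Local Open Scope classical_set_scope.
Local Open Scope ring_scope.
Set Implicit Arguments. Unset Strict Implicit. Unset Printing Implicit Defensive.
Lemma ftc_pow (R : realType) (s a : R) : 0 < s -> 0 < a -> a < 1 ->
  (\int[@lebesgue_measure R]_(x in `[a, 1%R]) (x `^ (s - 1))%:E =
   ((1 - a `^ s) / s)%:E)%E.
Proof.
move=> s0 a0 a1.
have dF : {in `]0, +oo[, forall x, derivable (fun x => s^-1 * x `^ s) x 1}.
  move=> x x0; apply: derivableM => //; exact: derivable_powR.
have dP : {in `]0, +oo[, forall x, derivable (fun x => x `^ (s - 1)) x 1}.
  by move=> x x0; exact: derivable_powR.
have sub : forall x, x \in `[a, 1] -> x \in `]0, +oo[.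
  by move=> x; rewrite !in_itv /= andbT => /andP[ax _]; exact: lt_le_trans ax.
have H : {within `[a, 1], continuous (fun x => x `^ (s - 1))}.
  by apply: derivable_within_continuous => x xa; apply: dP; exact: sub.
have dLR : derivable_oo_LRcontinuous (fun x => s^-1 * x `^ s) a 1.
  have cF : {within `[a, 1], continuous (fun x => s^-1 * x `^ s)}.
    by apply: derivable_within_continuous => x xa; apply: dF; exact: sub.
  move/(continuous_within_itvP _ a1): cF => [_ ? ?]; split => //.
  move=> x xa; apply: dF; apply: sub; exact: subset_itv_oo_cc.
have der : {in `]a, 1[, ((fun x => s^-1 * x `^ s)^`())%classic =1 (fun x => x `^ (s - 1))}.
  move=> x xa.
  have x0 : 0 < x by move: xa; rewrite in_itv /= => /andP[+ _]; exact: lt_trans.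
  rewrite derive1E deriveM; last 2 first.
    exact: derivable_cst.
    by apply: derivable_powR; rewrite in_itv /= x0.
  rewrite derive_cst scaler0 addr0 -derive1E powR_derive1 ?in_itv /= ?x0 //.
  by rewrite /GRing.scale /= mulrA mulVf ?mul1r // gt_eqF.
rewrite (continuous_FTC2 a1 H dLR der).
by rewrite powR1 /= -EFinB; congr EFin; rewrite -mulrBr mulrC.
Qed.
Lemma int_pow_01 (R : realType) (s : R) : 0 < s ->
  (\int[@lebesgue_measure R]_(x in `]0%R, 1%R]) ((x `^ (s - 1))%R)%:E <= (s^-1)%:E)%E.
Proof.
move=> s0.
pose a := fun n : nat => (n.+2%:R : R)^-1.
have a0 n : 0 < a n by rewrite /a invr_gt0.
have a1 n : a n < 1 by rewrite /a invf_lt1 // ltr1n.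
have anti m n : (m <= n)%N -> a n <= a m.
  by move=> mn; rewrite /a lef_pV2 ?posrE // ler_nat ltnS.
pose f := fun x : R => (x `^ (s - 1))%:E.
pose g := fun n => f \_ `[a n, 1%R].
have mD : measurable (`]0%R, 1%R] : set R) by [].
have mf : measurable_fun setT f.
  by apply/measurable_EFinP; exact: measurable_powR.
have E : (\int[lebesgue_measure]_(x in `]0%R, 1%R]) f x =
          \int[lebesgue_measure]_(x in `]0%R, 1%R]) limn (g ^~ x))%E.
  apply: eq_integral => x; rewrite inE /= in_itv /= => /andP[x0 x1].
  apply/esym/lim_near_cst => //.
  near=> n; rewrite /g patchE ifT // inE /= in_itv /= x1 andbT.
  rewrite /a -(invrK x) lef_pV2 ?posrE ?invr_gt0 //.
  have : x^-1 < n%:R by near: n; exact: nbhs_infty_gtr.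
  move/ltW/le_trans; apply; rewrite ler_nat.
  exact: (leq_trans (leqnSn n) (leqnSn n.+1)).
rewrite E monotone_convergence //; first last.
- move=> x Dx m n mn; rewrite /g !patchE.
  case: ifPn => xm; last by case: ifPn => _ //; apply: powR_ge0.
  rewrite ifT //; move: xm; rewrite !inE /= !in_itv /= => /andP[amx ->].
  by rewrite andbT (le_trans (anti _ _ mn)).
- by move=> n x _; apply: erestrict_ge0 => y _; rewrite /f lee_fin powR_ge0.
- by move=> n; apply/measurable_restrict => //; exact: measurable_funTS.
apply: lime_le.
  apply: ereal_nondecreasing_is_cvgn => m n mn.
  apply: ge0_le_integral => //.
  - by move=> x _; apply: erestrict_ge0 => y _; rewrite /f lee_fin powR_ge0.
  - by apply/measurable_restrict => //; exact: measurable_funTS.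
  - by apply/measurable_restrict => //; exact: measurable_funTS.
  - move=> x Dx; rewrite /g !patchE.
    case: ifPn => xm; last by case: ifPn => _ //; apply: powR_ge0.
    rewrite ifT //; move: xm; rewrite !inE /= !in_itv /= => /andP[amx ->].
    by rewrite andbT (le_trans (anti _ _ mn)).
apply: nearW => n.
rewrite /g -integral_mkcondr setIidr; last first.
  move=> x /=; rewrite !in_itv /= => /andP[ax ->]; rewrite andbT.
  exact: lt_le_trans ax.
rewrite ftc_pow // lee_fin -[X in _ <= X]mul1r ler_pM2r ?invr_gt0 //.
by rewrite lerBlDr lerDl powR_ge0.
Unshelve. all: by end_near. Qed.

Lemma ln_le_sub1 (R : realType) (y : R) : 0 < y -> ln y <= y - 1.
Proof.
move=> y0; have := @le_ln1Dx R (y - 1).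
rewrite (_ : 1 + (y - 1) = y); last by ring.
apply; lra.
Qed.

Lemma gam_lower (R : realType) (s x : R) : 0 < s -> 1 <= x <= 2 ->
  expR (-3) <= x `^ (s - 1) * expR (- x).
Proof.
move=> s0 /andP[x1 x2].
have x0 : 0 < x by lra.
have l0 : 0 <= ln x by rewrite ln_ge0.
have l1 : ln x <= 1 by have := ln_le_sub1 x0; lra.
rewrite /powR gt_eqF // (_ : -3 = -1 + -2); last by ring.
rewrite expRD; apply: ler_pM; rewrite ?expR_ge0 // ler_expR; nra.
Qed.

Lemma gam_upper (R : realType) (s x : R) : 0 < s -> 1 < x ->
  x `^ (s - 1) * expR (- x) <=
  2 * expR (s * (ln (2 * s) - 1)) * exponential_pdf (2^-1) x.
Proof.
move=> s0 x1.
have x0 : 0 < x by lra.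
have l0 : 0 <= ln x by rewrite ln_ge0 // ltW.
have s2 : 0 < 2 * s by lra.
have h : ln (x / (2 * s)) <= x / (2 * s) - 1 by apply: ln_le_sub1; exact: divr_gt0.
rewrite lnM ?posrE ?invr_gt0 // lnV ?posrE // in h.
have h2 : s * (ln x - ln (2 * s)) <= s * (x / (2 * s) - 1) by rewrite ler_pM2l.
rewrite (_ : s * (x / (2 * s) - 1) = x / 2 - s) in h2; last by field; lra.
rewrite exponential_pdfE; last exact: ltW.
rewrite /powR gt_eqF //.
rewrite -expRD mulrA (_ : 2 * expR (s * (ln (2 * s) - 1)) * 2^-1 = expR (s * (ln (2 * s) - 1))); last by field.
rewrite -expRD ler_expR; nra.
Qed.

Lemma Gamma_gt0 (R : realType) (s : R) : 0 < s -> 0 < Gamma s.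
Proof.
move=> s0; rewrite /Gamma /Rintegral.
set f := (fun x : R => x `^ (s - 1) * expR (- x)).
have mf : measurable_fun setT (EFin \o f).
  apply/measurable_EFinP; apply: measurable_funM => //.
  apply: measurableT_comp => //; exact: measurable_expR.
have f0 : forall x, 0 <= f x by move=> x; rewrite /f mulr_ge0 ?powR_ge0 ?expR_ge0.
apply: fine_gt0; apply/andP; split.
- apply: (@lt_le_trans _ _ (expR (-3))%:E); first by rewrite lte_fin expR_gt0.
  have H1 : (\int[lebesgue_measure]_(x in `[1%R, 2%R]) (f x)%:E <=
             \int[lebesgue_measure]_(x in `]0%R, +oo[) (f x)%:E)%E.
    apply: ge0_subset_integral => //; first exact: measurable_funTS.
      by move=> x _; rewrite lee_fin; exact: f0.
    by move=> x /=; rewrite !in_itv /= andbT => /andP[x1 _]; exact: lt_le_trans x1.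
  apply: le_trans H1.
  rewrite (_ : (expR (-3))%:E = \int[lebesgue_measure]_(x in `[1%R, 2%R]) (cst (expR (-3))%:E x))%E; last first.
    rewrite integral_cst //= lebesgue_measure_itv /= lte_fin ltr1n -EFinB -EFinM.
    by congr EFin; ring.
  apply: ge0_le_integral => //.
  + by move=> x _; rewrite lee_fin expR_ge0.
  + exact: measurable_funTS.
  + by move=> x; rewrite /= in_itv /= => x12; rewrite lee_fin gam_lower.
- have -> : (`]0%R, +oo[%classic : set R) = `]0%R, 1%R] `|` `]1%R, +oo[.
    apply/seteqP; split => x /=; rewrite !in_itv /= ?andbT.
      by move=> x0; case: (leP x 1) => x1; [left; apply/andP | right].
    by case => [/andP[] //|x1]; exact: lt_trans x1.
  have HA : (\int[lebesgue_measure]_(x in `]0%R, 1%R]) (f x)%:E < +oo)%E.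
    apply: (@le_lt_trans _ _ (s^-1)%:E); last exact: ltry.
    apply: le_trans (int_pow_01 s0).
    apply: ge0_le_integral => //.
    * by move=> x _; rewrite lee_fin; exact: f0.
    * exact: measurable_funTS.
    * apply: measurable_funTS; apply/measurable_EFinP; exact: measurable_powR.
    * move=> x; rewrite /= in_itv /= => /andP[x0 _]; rewrite lee_fin /f.
      by rewrite ler_piMr ?powR_ge0 // expR_le1 oppr_le0 ltW.
  have HB : (\int[lebesgue_measure]_(x in `]1%R, +oo[) (f x)%:E < +oo)%E.
    set C := 2 * expR (s * (ln (2 * s) - 1)).
    have C0 : 0 <= C by rewrite /C mulr_ge0 ?expR_ge0.
    have mp : measurable_fun setT (fun x => (exponential_pdf (2^-1 : R) x)%:E).
      by apply/measurable_EFinP; exact: measurable_exponential_pdf.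
    have H2 : (\int[lebesgue_measure]_(x in `]1%R, +oo[) (f x)%:E <= \int[lebesgue_measure]_(x in `]1%R, +oo[) (C%:E * (exponential_pdf (2^-1 : R) x)%:E))%E.
      apply: ge0_le_integral => //.
      * by move=> x _; rewrite lee_fin; exact: f0.
      * exact: measurable_funTS.
      * by apply: emeasurable_funM => //; exact: measurable_funTS.
      * move=> x; rewrite /= in_itv /= andbT => x1; rewrite -EFinM lee_fin.
        exact: gam_upper.
    move: H2 => /le_lt_trans; apply.
    rewrite ge0_integralZl_EFin //; last 2 first.
      by move=> x _; rewrite lee_fin exponential_pdf_ge0.
      exact: measurable_funTS.
    apply: (@le_lt_trans _ _ (C%:E * 1)%E); last by rewrite mule1 ltry.
    apply: lee_pmul => //; first by apply: integral_ge0 => x _; rewrite lee_fin exponential_pdf_ge0.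
    rewrite -(integral_exponential_pdf (R := R) (rate := 2^-1)) //.
    apply: ge0_subset_integral => //.
    by move=> x _; rewrite lee_fin exponential_pdf_ge0.
  rewrite ge0_integral_setU //; last 3 first.
  + apply: measurable_funTS. exact: mf.
  + by move=> x _; rewrite lee_fin; exact: f0.
  + apply/disj_set2P; rewrite -subset0 => x [] /=; rewrite !in_itv /= andbT => /andP[_ x1] x1'; lra.
  exact: lte_add_pinfty HA HB.
Qed.

Section Main.
Variable R : realType.

Definition i0 : 'I_3 := @Ordinal 3 0 isT.
Definition i1 : 'I_3 := @Ordinal 3 1 isT.
Definition i2 : 'I_3 := @Ordinal 3 2 isT.

Lemma dotv3 (a b : 'I_3 -> R) : dotv a b = a i0 * b i0 + a i1 * b i1 + a i2 * b i2.
Proof.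
rewrite /dotv !big_ord_recl big_ord0 addr0 addrA.
by congr (_ * _ + _ * _ + _ * _); congr (_ _); apply: val_inj.
Qed.

Lemma ord3E (P : 'I_3 -> Prop) : P i0 -> P i1 -> P i2 -> forall i, P i.
Proof.
move=> p0 p1 p2 [[|[|[|k]]] Hk] //.
- by rewrite (_ : Ordinal Hk = i0) //; apply: val_inj.
- by rewrite (_ : Ordinal Hk = i1) //; apply: val_inj.
- by rewrite (_ : Ordinal Hk = i2) //; apply: val_inj.
Qed.

Definition Bc (mu phi : R) : R :=
  Gamma phi / (Gamma (mu * phi) * Gamma ((1 - mu) * phi)).

Lemma Bc_gt0 mu phi : 0 < mu < 1 -> 0 < phi -> 0 < Bc mu phi.
Proof.
move=> /andP[m0 m1] p0; rewrite /Bc divr_gt0 ?mulr_gt0 ?Gamma_gt0 //.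
  by rewrite mulr_gt0.
by rewrite mulr_gt0 // subr_gt0.
Qed.

Definition etaf (th : R * R * R) : 'I_3 -> R := fun i =>
  match nat_of_ord i with
  | 0 => ln (th.1.1 / (1 - th.1.1)) - ln (Bc th.1.2 th.2)
  | 1 => th.1.2 * th.2
  | _ => (1 - th.1.2) * th.2
  end.

Definition Tf (c y : R) : 'I_3 -> R := fun i =>
  if y == c then (if nat_of_ord i == 0%N then 1 else 0)
  else match nat_of_ord i with
  | 0 => 0
  | 1 => ln y
  | _ => ln (1 - y)
  end.

Definition Bst (x : 'I_3 -> R) : R :=
  ln (1 + expR (x i0 + ln (Bc (x i1 / (x i1 + x i2)) (x i1 + x i2))))
  - ln (Bc (x i1 / (x i1 + x i2)) (x i1 + x i2)).

Definition hf (c y : R) : R := if y == c then 1 else expR (- (ln y + ln (1 - y))).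

Lemma BstE al mu phi : 0 < al < 1 -> 0 < mu < 1 -> 0 < phi ->
  Bst (etaf (al, mu, phi)) = - ln (1 - al) - ln (Bc mu phi).
Proof.
move=> /andP[a0 a1] mu01 p0; rewrite /Bst /etaf /=.
rewrite (_ : mu * phi + (1 - mu) * phi = phi); last by ring.
rewrite mulfK ?gt_eqF // subrK lnK; last first.
  by rewrite posrE divr_gt0 // subr_gt0.
rewrite (_ : 1 + al / (1 - al) = (1 - al)^-1); last by field; lra.
by rewrite lnV // posrE subr_gt0.
Qed.


Lemma lnratio (al : R) : 0 < al < 1 -> ln (al / (1 - al)) = ln al - ln (1 - al).
Proof.
move=> /andP[a0 a1].
by rewrite lnM ?lnV ?posrE ?invr_gt0 ?subr_gt0.
Qed.

Lemma expform (c : R) (th : R * R * R) (y : R) : c = 0 \/ c = 1 -> Theta th -> Ysupp c y ->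
  bi c th y = expR (dotv (etaf th) (Tf c y) - Bst (etaf th)) * hf c y.
Proof.
move=> hc; case: th => [[al mu] phi] [/= a01 [m01 p0]] Yy.
have /andP[a0 a1] := a01; have /andP[m0 m1] := m01.
rewrite /bi /hf /Tf dotv3 BstE //.
case: (eqVneq y c) => [?|yc]; first subst y.
  rewrite eqxx mulr1 /etaf /= mulr1 !mulr0 !addr0 lnratio //.
  rewrite -{1}[al](@lnK R); last by rewrite posrE.
  by congr expR; ring.
have y01 : 0 < y < 1.
  case: Yy => [|/= E]; first by rewrite /= in_itv.
  by rewrite E eqxx in yc.
have /andP[y0 y1] := y01.
rewrite /etaf /= /beta_density /powR !gt_eqF ?subr_gt0 //.
have B0 := Bc_gt0 m01 p0.
rewrite -/(Bc mu phi) -{1}[Bc mu phi](@lnK R) ?posrE //.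
rewrite -{1}[1 - al](@lnK R) ?posrE ?subr_gt0 //.
rewrite -!expRD; congr expR; ring.
Qed.

Lemma eta_inj (t1 t2 : R * R * R) : Theta t1 -> Theta t2 -> etaf t1 = etaf t2 -> t1 = t2.
Proof.
case: t1 => [[a1 m1] p1]; case: t2 => [[a2 m2] p2].
move=> [/= /andP[a10 a11] [/andP[m10 m11] p10]] [/= /andP[a20 a21] [/andP[m20 m21] p20]] E.
have e1 := congr1 (fun f => f i1) E; have e2 := congr1 (fun f => f i2) E.
have e0 := congr1 (fun f => f i0) E.
rewrite /etaf /= in e0 e1 e2.
have pp : p1 = p2 by nra.
subst p2.
have mm : m1 = m2 by apply: (mulIf (x := p1)); rewrite ?gt_eqF.
subst m2.
have : ln (a1 / (1 - a1)) = ln (a2 / (1 - a2)) by lra.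
move/ln_inj; rewrite !posrE !divr_gt0 ?subr_gt0 // => /(_ isT isT) ea.
have key : forall a : R, a < 1 -> a = (a / (1 - a)) / (1 + a / (1 - a)).
  by move=> a a1'; field; lra.
by rewrite (key a1) // ea -key.
Qed.

End Main.
Section M3.
Variable R : realType.

Lemma Theta_mk (al mu phi : R) : 0 < al < 1 -> 0 < mu < 1 -> 0 < phi ->
  Theta (al, mu, phi).
Proof. by move=> *; split => //. Qed.

Lemma etaf0 (al mu phi : R) : etaf (al, mu, phi) i0 = ln (al / (1 - al)) - ln (Bc mu phi).
Proof. by []. Qed.
Lemma etaf1 (al mu phi : R) : etaf (al, mu, phi) i1 = mu * phi.
Proof. by []. Qed.
Lemma etaf2 (al mu phi : R) : etaf (al, mu, phi) i2 = (1 - mu) * phi.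
Proof. by []. Qed.

Lemma eta_onto (x : 'I_3 -> R) : 0 < x i1 -> 0 < x i2 ->
  exists2 th, Theta th & etaf th = x.
Proof.
move=> x1 x2.
set phi := x i1 + x i2.
have p0 : 0 < phi by rewrite /phi addr_gt0.
set mu := x i1 / phi.
have m01 : 0 < mu < 1.
  rewrite /mu divr_gt0 //= ltr_pdivrMr // mul1r /phi ltrDl //.
have B0 := Bc_gt0 m01 p0.
set t := x i0 + ln (Bc mu phi).
set al := expR t / (1 + expR t).
have e0 : 0 < expR t := expR_gt0 t.
have a01 : 0 < al < 1.
  by rewrite /al divr_gt0 ?addr_gt0 //= ltr_pdivrMr ?addr_gt0 // mul1r ltrDr.
exists (al, mu, phi); first exact: Theta_mk.
apply: funext; apply: ord3E.
- rewrite etaf0 (_ : al / (1 - al) = expR t); last by rewrite /al; field; lra.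
  by rewrite expRK /t addrK.
- by rewrite etaf1 /mu divfK // gt_eqF.
- rewrite etaf2 mulrBl mul1r /mu divfK ?gt_eqF // /phi; ring.
Qed.

Definition pt (p q r : R) : 'I_3 -> R := fun i =>
  match nat_of_ord i with 0 => p | 1 => q | _ => r end.

Lemma dotv_pt a (p q r : R) : dotv a (pt p q r) = a i0 * p + a i1 * q + a i2 * r.
Proof. by rewrite dotv3. Qed.

Lemma eta_nolin (a : 'I_3 -> R) (b : R) :
  (forall th, Theta th -> dotv a (etaf th) = b) -> forall i, a i = 0.
Proof.
move=> H.
have [u [v [hu [huv hv]]]] : exists u v : R, 1 < u /\ u < v /\ v < 2.
  by exists (5/4), (3/2); split; [lra|split; lra].
have G p q r : 0 < q -> 0 < r -> a i0 * p + a i1 * q + a i2 * r = b.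
  move=> q0 r0; have [th Th E] := @eta_onto (pt p q r) q0 r0.
  by rewrite -dotv_pt -E; apply: H.
have u0 : 0 < u by lra.
have v0 : 0 < v by lra.
have E1 := G u u u u0 u0.
have E2 := G v u u u0 u0.
have E3 := G u v u v0 u0.
have E4 := G u u v u0 v0.
have vu : v - u != 0 by rewrite subr_eq0 gt_eqF.
have K : forall z : R, z * (v - u) = b - b -> z = 0.
  by move=> z; rewrite subrr => /eqP; rewrite mulf_eq0 (negbTE vu) orbF => /eqP.
apply: ord3E; apply: K.
- by rewrite -{1}E2 -E1; ring.
- by rewrite -{1}E3 -E1; ring.
- by rewrite -{1}E4 -E1; ring.
Qed.

End M3.
Section M4.
Variable R : realType.

Lemma cont_g (a1 a2 y0 : R) : 0 < y0 < 1 ->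
  {for y0, continuous (fun y => a1 * ln y + a2 * ln (1 - y))}.
Proof.
move=> /andP[y00 y01].
have c1 : {for y0, continuous (fun y : R => a1 * ln y)}.
  apply: continuousM; first exact: cst_continuous.
  exact: continuous_ln.
have c3 : {for y0, continuous (fun y : R => 1 - y)}.
  by apply: continuousB; [exact: cst_continuous | exact: cvg_id].
have c2 : {for y0, continuous (fun y : R => ln (1 - y))}.
  apply: (continuous_comp c3); apply: continuous_ln; rewrite subr_gt0 //.
have c4 : {for y0, continuous (fun y : R => a2 * ln (1 - y))}.
  by apply: continuousM; first exact: cst_continuous.
exact: continuousD c1 c4.
Qed.


Lemma Tf_c (c : R) : Tf c c = (fun i => if nat_of_ord i == 0%N then 1 else 0).
Proof. by rewrite /Tf eqxx. Qed.

Lemma dotv_Tfc (c : R) a : dotv a (Tf c c) = a i0.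
Proof. by rewrite dotv3 Tf_c /= mulr1 !mulr0 !addr0. Qed.

Lemma dotv_Tfy (c y : R) a : y != c ->
  dotv a (Tf c y) = a i1 * ln y + a i2 * ln (1 - y).
Proof. by move=> yc; rewrite dotv3 /Tf (negbTE yc) /= mulr0 add0r. Qed.

Lemma T_nolin (c : R) (a : 'I_3 -> R) (b : R) : c = 0 \/ c = 1 ->
  {ae nu c, forall y, Ysupp c y -> dotv a (Tf c y) = b} -> forall i, a i = 0.
Proof.
move=> hc [N [mN N0 sub]].
have notN y : ~ N y -> Ysupp c y -> dotv a (Tf c y) = b.
  move=> Ny; have [//|nP] := pselect (Ysupp c y -> dotv a (Tf c y) = b).
  by exfalso; apply: Ny; apply: sub.
have N0' : (mrestr (@lebesgue_measure R) (measurable_itv `]0%R, 1%R[) N + \d_c N = 0)%E.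
  by rewrite -N0; apply/esym; exact: (measure_addE _ _ N).
move: N0'; rewrite diracE /mrestr => /eqP; rewrite padde_eq0 ?measure_ge0 ?lee_fin //.
case/andP => /eqP L0 /eqP; rewrite /= => cN.
have cnN : ~ N c.
  move=> Nc; move: cN; rewrite (_ : c \in N = true) ?mem_set //.
  by move=> [] /eqP; rewrite oner_eq0.
have a0b : a i0 = b.
  by rewrite -(dotv_Tfc c a); apply: notN => //; right.
have cne y : 0 < y < 1 -> y != c.
  move=> /andP[y0 y1]; apply/eqP => yc; case: hc => hc; clear -y0 y1 yc hc; lra.
have exy u v : 0 <= u -> u < v -> v <= 1 -> exists y, u < y < v /\ ~ N y.
  move=> u0 uv v1.
  have [//|nE] := pselect (exists y, u < y < v /\ ~ N y).
  have S : (`]u, v[ : set R) `<=` N `&` `]0%R, 1%R[.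
    move=> y; rewrite /= in_itv /= => yuv; split; last first.
      rewrite /= in_itv /=; case/andP: yuv => uy yv; apply/andP; split.
        exact: le_lt_trans u0 uy.
      exact: lt_le_trans yv v1.
    by have [//|nNy] := pselect (N y); exfalso; apply: nE; exists y.
  have m1 : (`]u, v[%classic : set R) \in measurable by rewrite inE.
  have m2 : (N `&` `]0%R, 1%R[ : set R) \in measurable.
    by rewrite inE; apply: measurableI.
  have : (@lebesgue_measure R `]u, v[ <= @lebesgue_measure R (N `&` `]0%R, 1%R[))%E.
    exact: (@le_measure _ _ _ (@lebesgue_measure R) _ _ m1 m2 S).
  rewrite L0 lebesgue_measure_itv /= lte_fin uv -EFinB lee_fin subr_le0 leNgt.
  by rewrite uv.
clear N0 L0 cN.
have gb y0 : 0 < y0 < 1 -> a i1 * ln y0 + a i2 * ln (1 - y0) = b.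
  move=> y01; set g := fun y => a i1 * ln y + a i2 * ln (1 - y).
  case: (eqVneq (g y0) b) => // ne.
  set e := `|g y0 - b|.
  have e0 : 0 < e by rewrite /e normr_gt0 subr_eq0.
  have := @cont_g (a i1) (a i2) y0 y01.
  move/cvgrPdist_lt => /(_ e e0) /nbhs_ballP [d d0 Hd].
  have /andP[y00 y01'] := y01.
  set r := Num.min d (Num.min y0 (1 - y0)).
  have r0 : 0 < r by rewrite /r !lt_min d0 y00 subr_gt0 y01'.
  have rd : r <= d by rewrite /r ge_min lexx.
  have ry : r <= y0 by rewrite /r !ge_min lexx orbT.
  have r1 : r <= 1 - y0 by rewrite /r !ge_min lexx !orbT.
  have q1 : 0 <= y0 - r by lra.
  have q2 : y0 - r < y0 + r by lra.
  have q3 : y0 + r <= 1 by lra.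
  have [y [/andP[uy yv] Ny]] := exy (y0 - r) (y0 + r) q1 q2 q3.
  have y01y : 0 < y < 1 by apply/andP; split; lra.
  have gy : g y = b.
    rewrite /g -(@dotv_Tfy c) ?cne //; apply: notN => //; left.
    by rewrite /= in_itv /=.
  have : `|g y0 - g y| < e.
    apply: (Hd y); rewrite /ball /= ltr_distlC; apply/andP; split; lra.
  by rewrite gy ltxx.
have [u [h [u0 [uh [hh hu]]]]] : exists u h : R,
    0 < u /\ u < h /\ h + h = 1 /\ u * (1 - u) < h * h.
  by exists 4^-1, 2^-1; split; [lra | split; [lra | split; lra]].
have w1 : 0 < u < 1 by apply/andP; split; lra.
have w2 : 0 < 1 - u < 1 by apply/andP; split; lra.
have w3 : 0 < h < 1 by apply/andP; split; lra.
have E1 := gb u w1.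
have E2 := gb (1 - u) w2.
have E3 := gb h w3.
rewrite (_ : 1 - (1 - u) = u) in E2; last by ring.
rewrite (_ : 1 - h = h) in E3; last by lra.
have pu : 0 < u by [].
have pu1 : 0 < 1 - u by lra.
have ph : 0 < h by lra.
have lnlt : ln u < ln (1 - u) by rewrite ltr_ln ?posrE //; lra.
have ha12 : a i1 = a i2.
  have : (a i1 - a i2) * (ln u - ln (1 - u)) = b - b by rewrite -{1}E1 -E2; ring.
  rewrite subrr => /eqP; rewrite mulf_eq0 subr_eq0 (negbTE (ltr0_neq0 _)) ?orbF.
    by move/eqP.
  by rewrite subr_lt0.
have lnlt2 : ln (u * (1 - u)) < ln (h * h).
  by rewrite ltr_ln ?posrE ?mulr_gt0.
rewrite !lnM ?posrE // in lnlt2.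
have ha1 : a i1 = 0.
  have : a i1 * (ln u + ln (1 - u) - (ln h + ln h)) = b - b.
    by rewrite -{1}E1 -E3 -ha12; ring.
  have neg : ln u + ln (1 - u) - (ln h + ln h) < 0 by rewrite subr_lt0.
  rewrite subrr => /eqP; rewrite mulf_eq0 (negbTE (ltr0_neq0 neg)) orbF.
  by move/eqP.
have ha2 : a i2 = 0 by rewrite -ha12.
have hb : b = 0 by rewrite -E3 ha1 ha2 !mul0r addr0.
by apply: ord3E => //; rewrite a0b.
Qed.

End M4.

Unset Implicit Arguments.
Local Close Scope classical_set_scope.

Theorem proposition1 (R : realType) (c : R) :
  c = 0 \/ c = 1 ->
  full_rank_exp_family (nu c) (Ysupp c) (@Theta R) 3 (bi c).
Proof.
move=> hc.
exists (@etaf R), (@Tf R c), (@Bst R), (@hf R c).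
split; first exact: eta_inj.
split.
  by move=> y _; rewrite /hf; case: ifP => _; [exact: ltr01 | exact: expR_gt0].
split; first by move=> th y Th Yy; exact: expform.
split; first by move=> a b H; exact: (T_nolin hc H).
split; first exact: eta_nolin.
exists (fun _ => 1), (fun _ => 2); split; first by move=> i; rewrite ltr1n.
move=> x hx; apply: eta_onto.
  by have /andP[h _] := hx i1; exact: lt_trans h.
by have /andP[h _] := hx i2; exact: lt_trans h.
Qed.
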